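(* For every $k\ge1$ and every $\ell\in\{1,\dots,12\}$, the string $t_\ell(k)$ is a Nyldon word.
   Context: Strings are over the binary alphabet $\{a,b\}$ ordered by $a \prec b$, and $\prec$ also denotes the induced lexicographic order on strings: $x \prec y$ iff $x$ is a proper prefix of $y$, or there is $i$ with $x[1..i-1]=y[1..i-1]$ and $x[i]\prec y[i]$; $x\preceq y$ means $x\prec y$ or $x=y$. Nyldon words are defined recursively: every string of length $1$ is a Nyldon word; a string $w$ with $|w|\ge 2$ is a Nyldon word iff there is no factorization $w=\gamma_1\cdots\gamma_m$ with $m\ge 2$, each $\gamma_i$ a nonempty Nyldon word, and $\gamma_1\preceq\gamma_2\preceq\cdots\preceq\gamma_m$. For a binary string $w$, $\overline{w}$ is obtained by exchanging $a$ and $b$ letterwise, and $w'$ is $w$ with its last letter removed; $\overline{w}'$ means $(\overline{w})'$. Thue–Morse words: $\mathit{TM}_0=a$ and $\mathit{TM}_k=\mathit{TM}_{k-1}\cdot\overline{\mathit{TM}_{k-1}}$ for $k\ge1$. For $k\ge1$ put $A=\mathit{TM}_{2k}$, $B=\overline{\mathit{TM}_{2k}}$ and define $t_1(k)=b\,A\,B'$, $t_2(k)=b\,A\,B$, $t_3(k)=b\,A\,B\,B'$, $t_4(k)=b\,A$, $t_5(k)=b\,A\,\mathit{TM}_{2k-1}\,\overline{\mathit{TM}_{2k-2}}'$, $t_6(k)=b\,A\,A\,B'$, $t_7(k)=b\,A\,A\,B$, $t_8(k)=b\,A\,A\,B\,B'$, $t_9(k)=b\,A\,B\,A\,A\,B'$,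 $t_{10}(k)=b\,A\,B\,A\,A\,B$, $t_{11}(k)=b\,A\,A\,B\,B\,A\,A\,B'$, $t_{12}(k)=b\,A\,B\,A\,A\,B\,B\,A\,A\,B'$. *)

(* Defs.v *)
From mathcomp Require Import all_boot.
Set Implicit Arguments. Unset Strict Implicit. Unset Printing Implicit Defensive.

(* Binary alphabet {a,b}: letters are booleans, a := false, b := true, so a < b. *)
Definition letter := bool.
Definition la : letter := false.
Definition lb : letter := true.
Definition word := seq letter.

Fixpoint lexlt (x y : word) : bool :=
  match x, y with
  | [::], [::] => false
  | [::], _ :: _ => true
  | _ :: _, [::] => false
  | c :: s, d :: t => (~~ c && d) || ((c == d) && lexlt s t)
  end.
Definition lexle (x y : word) : bool := (x == y) || lexlt x y.

(* Nyldon words, recursive definition with fuel n >= |w|. *)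
Fixpoint nyldon_fuel (n : nat) (w : word) : Prop :=
  match n with
  | 0 => False
  | n'.+1 =>
      size w = 1 \/
      (2 <= size w /\
       ~ exists fs : seq word,
           [/\ 2 <= size fs, flatten fs = w,
               (forall g, g \in fs -> 0 < size g /\ nyldon_fuel n' g)
             & sorted lexle fs])
  end.
Definition nyldon (w : word) : Prop := nyldon_fuel (size w) w.

Definition compl (w : word) : word := map negb w.
Definition dropl (w : word) : word := take (size w).-1 w.

Fixpoint TM (k : nat) : word :=
  match k with 0 => [:: la] | k'.+1 => TM k' ++ compl (TM k') end.

Definition tword (l k : nat) : word :=
  let A := TM (2 * k) in
  let B := compl (TM (2 * k)) in
  match l with
  | 1 => lb :: A ++ dropl B
  | 2 => lb :: A ++ B
  | 3 => lb :: A ++ B ++ dropl B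
  | 4 => lb :: A
  | 5 => lb :: A ++ TM (2 * k - 1) ++ dropl (compl (TM (2 * k - 2)))
  | 6 => lb :: A ++ A ++ dropl B
  | 7 => lb :: A ++ A ++ B
  | 8 => lb :: A ++ A ++ B ++ dropl B
  | 9 => lb :: A ++ B ++ A ++ A ++ dropl B
  | 10 => lb :: A ++ B ++ A ++ A ++ B
  | 11 => lb :: A ++ A ++ B ++ B ++ A ++ A ++ dropl B
  | 12 => lb :: A ++ B ++ A ++ A ++ B ++ B ++ A ++ A ++ dropl B
  | _ => [::]
  end.

(* Main.v *)
Require Import Defs.
From mathcomp Require Import all_boot.
From Stdlib Require Import Classical Lia.
From mathcomp Require Import zify.
Set Implicit Arguments. Unset Strict Implicit. Unset Printing Implicit Defensive.

Lemma lexlt_catl p x y : lexlt (p ++ x) (p ++ y) = lexlt x y.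
Proof. by elim: p => //= c p ->; case: c. Qed.

Lemma lexlt_irr x : lexlt x x = false.
Proof. by elim: x => //= c x ->; case: c. Qed.

Lemma lexlt_trans x y z : lexlt x y -> lexlt y z -> lexlt x z.
Proof.
elim: x y z => [|c x IH] [|d y] [|e z] //=.
by case: c; case: d; case: e => //=; apply: IH.
Qed.

Lemma lexlt_catr x y z : lexlt x y -> lexlt x (y ++ z).
Proof.
elim: x y => [|c x IH] [|d y] //=.
by case: c; case: d => //=; apply: IH.
Qed.

Lemma lexlt_prefix x c y : lexlt x (x ++ c :: y).
Proof. by elim: x => //= c' x ->; rewrite eqxx orbT. Qed.

Lemma lexlt_total x y : x != y -> lexlt x y || lexlt y x.
Proof.
elim: x y => [|c x IH] [|d y] //=.
case: c; case: d => //=; rewrite ?eqseq_cons /=; apply: IH.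
Qed.

Lemma lexlt_asym x y : lexlt x y -> lexlt y x -> False.
Proof. by move=> h1 h2; have := lexlt_trans h1 h2; rewrite lexlt_irr. Qed.

Lemma lexle_trans x y z : lexle x y -> lexle y z -> lexle x z.
Proof.
rewrite /lexle => /orP[/eqP->|h1] // /orP[/eqP<-|h2]; first by rewrite h1 orbT.
by rewrite (lexlt_trans h1 h2) orbT.
Qed.

Lemma lexlt_le_trans x y z : lexlt x y -> lexle y z -> lexlt x z.
Proof. by move=> h /orP[/eqP<-|h2] //; apply: lexlt_trans h h2. Qed.

Lemma lexle_lt_trans x y z : lexle x y -> lexlt y z -> lexlt x z.
Proof. by move=> /orP[/eqP->|h2] // h; apply: lexlt_trans h2 h. Qed.

Lemma lexltW x y : lexlt x y -> lexle x y.
Proof. by move=> h; rewrite /lexle h orbT. Qed.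

Lemma lexle_refl x : lexle x x.
Proof. by rewrite /lexle eqxx. Qed.

Lemma lexle_lt_false x y : lexle x y -> lexlt y x -> False.
Proof. by move=> /orP[/eqP->|h1] h2; [rewrite lexlt_irr in h2|apply: lexlt_asym h1 h2]. Qed.

Lemma not_lexle x y : ~~ lexle x y -> lexlt y x.
Proof.
rewrite /lexle negb_or => /andP[hne hlt].
by have := lexlt_total hne; rewrite (negbTE hlt).
Qed.

Ltac slia := repeat (match goal with |- context [size ?x] => let n := fresh "n" in set n := size x end); lia.

Definition isfact (fs : seq word) (w : word) :=
  [/\ flatten fs = w, (forall g, g \in fs -> 0 < size g /\ nyldon g) & sorted lexle fs].

Lemma size_flatten_ge (fs : seq word) :
  (forall g, g \in fs -> 0 < size g) -> size fs <= size (flatten fs).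
Proof.
elim: fs => //= h t IH H; rewrite size_cat.
have Ht : forall g0, g0 \in t -> 0 < size g0 by move=> g0 hg0; apply: H; rewrite inE hg0 orbT.
have := H h (mem_head _ _); have := IH Ht; move=> h1 h2; rewrite -add1n; exact: leq_add.
Qed.

Lemma size_mem_flatten (fs : seq word) g :
  (forall g, g \in fs -> 0 < size g) -> g \in fs -> size g + (size fs).-1 <= size (flatten fs).
Proof.
elim: fs => //= h t IH H; rewrite in_cons size_cat.
have Ht : forall g0, g0 \in t -> 0 < size g0 by move=> g0 hg0; apply: H; rewrite inE hg0 orbT.
move=> /orP[/eqP->|hg].
  have := size_flatten_ge Ht; slia.
have := IH Ht hg; have := H h (mem_head _ _).
have : 0 < size t by case: (t) hg.
slia.
Qed.

Definition nstep (P : word -> Prop) w := size w = 1 \/ (2 <= size w /\ ~ exists fs, [/\ 2 <= size fs, flatten fs = w,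
               (forall g, g \in fs -> 0 < size g /\ P g) & sorted lexle fs]).

Lemma nstep_ext (P Q : word -> Prop) w : (forall g, size g < size w -> (P g <-> Q g)) -> nstep P w -> nstep Q w.
Proof.
move=> HPQ [h|[h2 hn]]; [by left|right; split => //].
move=> [fs [h1 h3 h4 h5]]; apply: hn; exists fs; split => // g hg.
have [g0 gn] := h4 g hg; split => //.
have := size_mem_flatten (fun g hg => proj1 (h4 g hg)) hg; rewrite h3 => hs.
apply/HPQ => //; move: hs; slia.
Qed.

Lemma nstep_iff (P Q : word -> Prop) w : (forall g, size g < size w -> (P g <-> Q g)) -> nstep P w <-> nstep Q w.
Proof. move=> H; split; apply: nstep_ext => // g hg; by rewrite H. Qed.

Lemma fuelS n w : size w <= n -> nyldon_fuel n.+1 w <-> nyldon_fuel n w.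
Proof.
elim: n w => [|n IH] w hw.
  by case: w hw => //=; split => [[]|//] //; case.
change (nstep (nyldon_fuel n.+1) w <-> nstep (nyldon_fuel n) w).
apply: nstep_iff => g hg; apply: IH; move: hg hw; slia.
Qed.

Lemma fuel_nyl n w : size w <= n -> nyldon_fuel n w <-> nyldon w.
Proof.
move=> h; rewrite /nyldon; have -> : n = size w + (n - size w) by lia.
elim: (n - size w) => [|d IH]; first by rewrite addn0.
by rewrite addnS; rewrite fuelS ?IH //; lia.
Qed.

Lemma nyldonE w : nyldon w <-> nstep nyldon w.
Proof.
rewrite /nyldon; case hs: (size w) => [|n].
  by split => // -[//|[]]; rewrite hs.
change (nstep (nyldon_fuel n) w <-> nstep nyldon w).
apply: nstep_iff => g hg; apply: fuel_nyl; move: hg; rewrite hs; slia.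
Qed.

Lemma nyldon_size w : nyldon w -> 0 < size w.
Proof. by case/nyldonE => [h|[h _]]; move: h; slia. Qed.

Lemma nyl_nofact w fs : nyldon w -> 2 <= size fs -> isfact fs w -> False.
Proof.
case/nyldonE => [h1|[_ h]] hs [f1 f2 f3]; last by apply: h; exists fs.
have := size_flatten_ge (fun g hg => proj1 (f2 g hg)); rewrite f1; move: h1 hs; slia.
Qed.

Lemma fact_notnyl w fs : 2 <= size fs -> isfact fs w -> ~ nyldon w.
Proof. by move=> h1 h2 h3; apply: nyl_nofact h3 h1 h2. Qed.

Lemma existence w : 0 < size w -> exists fs, fs != [::] /\ isfact fs w.
Proof.
move=> hw; case: (classic (nyldon w)) => hn.
  exists [:: w]; split => //; split => //=; first by rewrite cats0.
  by move=> g; rewrite inE => /eqP->.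
have : ~ nstep nyldon w.
  by move=> h; apply: hn; apply/nyldonE.
move=> h; have h2 : 2 <= size w.
  case E: (size w) hw => [|[|n]] // _; exfalso; apply: h; left; exact: E.
have [fs [f1 f2 f3 f4]] : exists fs, [/\ 2 <= size fs, flatten fs = w,
       (forall g, g \in fs -> 0 < size g /\ nyldon g) & sorted lexle fs].
  by apply: NNPP => hne; apply: h; right.
by exists fs; split; [case: (fs) f1|].
Qed.

Lemma cat_split (x s u v : word) : x ++ s = u ++ v -> size v <= size s ->
  exists z, s = z ++ v /\ u = x ++ z.
Proof.
move=> E hs.
have hx : size x <= size u.
  by have := congr1 size E; rewrite !size_cat; move: hs; slia.
exists (drop (size x) u).
move: E; rewrite -{1}(cat_take_drop (size x) u) -catA => /eqP.
rewrite eqseq_cat ?size_takel // => /andP[/eqP hx1 /eqP hs1]; split => //.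
by rewrite {1}hx1 cat_take_drop.
Qed.

Lemma sorted_join (s1 s2 : seq word) z h :
  sorted lexle (rcons s1 z) -> sorted lexle (h :: s2) -> lexle z h ->
  sorted lexle (rcons s1 z ++ h :: s2).
Proof.
case: s1 => [|x s1] /=; first by move=> _ -> ->.
by rewrite cat_path rcons_path last_rcons /= => /andP[-> ->] -> ->.
Qed.

Lemma isfact_mem fs w g : isfact fs w -> g \in fs -> 0 < size g /\ nyldon g.
Proof. by case=> _ H _; apply: H. Qed.

Lemma isfact_rcons fs z w : isfact (rcons fs z) w ->
  [/\ w = flatten fs ++ z, 0 < size z, nyldon z & (fs != [::] -> isfact fs (flatten fs))].
Proof.
move=> hf; have [h1 h2 h3] := hf.
have hz : z \in rcons fs z by rewrite mem_rcons mem_head.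
have [z0 zn] := isfact_mem hf hz.
split => //; first by rewrite -h1 flatten_rcons.
move=> _; split => //.
  by move=> g hg; apply: (isfact_mem hf); rewrite mem_rcons inE hg orbT.
by move: h3; rewrite -cats1 => /cat_sorted2 [].
Qed.

Lemma flatten_nil fs w : isfact fs w -> fs != [::] -> 0 < size w.
Proof.
case: fs => //= h t hf _; have [h1 _ _] := hf.
have [h0 _] := isfact_mem hf (mem_head _ _); by rewrite -h1 size_cat; move: h0; slia.
Qed.

Definition Qlt n := forall g y t, size g < n -> nyldon g -> g = y ++ t -> y != [::] -> nyldon t -> lexlt t g.
Definition Pprop n := forall fs v x s, size v <= n -> isfact fs v -> fs != [::] -> v = x ++ s -> nyldon s ->
   size s <= size (last [::] fs).

Lemma P_lemma n : Qlt n -> Pprop n.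
Proof.
move=> HQ; elim=> [//|h t IH] v x s hv hf _ Ev hns.
have [hf1 hm hs] := hf.
case: t IH hf hf1 hm hs => [|t0 t1] IH hf hf1 hm hs.
  move: hf1 => /= ; rewrite cats0 => hf1; subst v.
  by rewrite hf1 size_cat; slia.
have ht0 : 0 < size t0 by apply: (proj1 (hm t0 _)); rewrite !inE eqxx orbT.
have hft : 0 < size (flatten (t0 :: t1)) by rewrite /= size_cat; move: ht0; slia.
rewrite /= in hf1.
case: (leqP (size h) (size x)) => hx.
  have [z [ez ex]] : exists z, flatten (t0 :: t1) = z ++ s /\ x = h ++ z.
    apply: cat_split; first by rewrite hf1 Ev.
    have := congr1 size Ev; rewrite -hf1 !size_cat; move: hx; slia.
  have := IH (flatten (t0 :: t1)) z s _ _ _ ez hns; apply.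
  - by move: hv; rewrite -hf1 size_cat; slia.
  - split => //; first by move=> g hg; apply: hm; rewrite inE hg orbT.
    by move: hs => /= /andP[_].
  - by [].
exfalso.
have [y [ey eh]] : exists y, s = y ++ flatten (t0 :: t1) /\ h = x ++ y.
  apply: cat_split; first by rewrite -Ev -hf1.
  have := congr1 size Ev; rewrite -hf1 !size_cat; move: hx; slia.
case: (eqVneq x [::]) => hx0.
  subst x; rewrite cat0s in eh; subst y.
  apply: (nyl_nofact hns (fs := h :: t0 :: t1)) => //; split => //.
have hy : 0 < size y by move: hx; rewrite eh size_cat; slia.
have [gs [gs0 hgs]] := existence hy.
move: gs0 hgs; case/lastP: gs => [//|gi z] _ hgs.
have [ey2 z0 zn _] := isfact_rcons hgs.
have hlt : lexlt z h.
  apply: (HQ h (x ++ flatten gi) z) => //.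
  - by move: hv; rewrite -hf1 size_cat; move: hft; slia.
  - by apply: (proj2 (hm h _)); rewrite mem_head.
  - by rewrite eh ey2 catA.
  - by case: (x) hx0.
have hle : lexle h t0 by move: hs => /= /andP[].
apply: (nyl_nofact hns (fs := rcons gi z ++ t0 :: t1)).
  by rewrite size_cat size_rcons /= addSn addnS.
split.
- by rewrite flatten_cat flatten_rcons -ey2 ey.
- move=> g; rewrite mem_cat => /orP[hg|hg]; first by apply: (isfact_mem hgs).
  by apply: hm; rewrite inE hg orbT.
- apply: sorted_join.
  + by have [_ _ ->] := hgs.
  + by move: hs => /= /andP[_].
  + by apply: lexltW; apply: lexlt_le_trans hlt hle.
Qed.

Lemma nonnil_size (y : word) : y != [::] -> 0 < size y.
Proof. by case: y. Qed.

Lemma Q_lemma n : Pprop n -> Qlt n -> Qlt n.+1.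
Proof.
move=> HP HQ g y0 t0 hg hng.
have key : forall d y t, size y <= d -> g = y ++ t -> y != [::] -> nyldon t -> lexlt t g.
  elim=> [|d IHd] y t hyd Eg hy hnt.
    by move: hyd hy; case: (y).
  case: (classic (exists y' t', [/\ g = y' ++ t', y' != [::], nyldon t' & size y' < size y])).
    move=> [y' [t' [Eg' hy' hnt' hlt]]].
    have h1 := IHd y' t' (ltac:(move: hlt hyd; slia)) Eg' hy' hnt'.
    have [z [ez ey]] : exists z, t' = z ++ t /\ y = y' ++ z.
      apply: cat_split; first by rewrite -Eg'.
      have := congr1 size Eg'; rewrite Eg !size_cat; move: hlt; slia.
    have hz : z != [::].
      by apply/eqP => hz; move: hlt; rewrite ey hz cats0 ltnn.
    have h2 : lexlt t t'.
      apply: (HQ t' z t) => //.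
      have := congr1 size Eg'; rewrite size_cat; move: hg (nonnil_size hy'); slia.
    exact: lexlt_trans h2 h1.
  move=> hmax.
  have maxP : forall y' t', g = y' ++ t' -> y' != [::] -> nyldon t' -> size y <= size y'.
    move=> y' t' h1 h2 h3; rewrite leqNgt; apply/negP => h4; apply: hmax; by exists y', t'.
  have [fs [fs0 hfs]] := existence (nonnil_size hy).
  move: fs0 hfs; case/lastP: fs => [//|fi ur] _ hfs.
  have [ey ur0 urn hfi] := isfact_rcons hfs.
  case: (boolP (lexle ur t)) => hle.
    exfalso; apply: (nyl_nofact hng (fs := rcons (rcons fi ur) t)).
      by rewrite !size_rcons.
    split.
    - by rewrite !flatten_rcons -ey.
    - move=> g'; rewrite mem_rcons inE => /orP[/eqP->|hg'].
        by split => //; apply: nyldon_size.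
      exact: (isfact_mem hfs).
    - rewrite -cats1; apply: sorted_join => //; by have [_ _ H] := hfs.
  have hlt := not_lexle hle.
  case: (eqVneq fi [::]) => hfi0.
    subst fi; rewrite /= in ey; subst y; rewrite Eg; exact: lexlt_catr.
  exfalso.
  have hfl := flatten_nil (hfi hfi0) hfi0.
  have hns : ~ nyldon (ur ++ t).
    move=> hn; have := maxP (flatten fi) (ur ++ t).
    rewrite Eg ey -catA => /(_ erefl) /(_ _) /(_ hn).
    have hfi1 : flatten fi != [::] by case: (flatten fi) hfl.
    move=> /(_ hfi1); rewrite size_cat; move: ur0; slia.
  have hs0 : 0 < size (ur ++ t) by rewrite size_cat; move: ur0; slia.
  have [vs [vs0 hvs]] := existence hs0.
  move: vs0 hvs; case/lastP: vs => [//|vi zz] _ hvs.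
  have [evs zz0 zzn hvi] := isfact_rcons hvs.
  case: (eqVneq vi [::]) => hvi0.
    by subst vi; apply: hns; rewrite evs.
  have hsz : size t <= size zz.
    have hsn : size (ur ++ t) <= n.
      have := congr1 size Eg; rewrite ey !size_cat; move: hg hfl; slia.
    have hrc : rcons vi zz != [::] by case: (vi).
    by have := HP _ _ ur t hsn hvs hrc erefl hnt; rewrite last_rcons.
  have hvfl := flatten_nil (hvi hvi0) hvi0.
  have hsz2 : size zz <= size t.
    have := maxP (flatten fi ++ flatten vi) zz; rewrite Eg ey -catA evs -catA => /(_ erefl).
    have hne : flatten fi ++ flatten vi != [::] by case: (flatten fi) hfl.
    move=> /(_ hne zzn).
    have := congr1 size evs; rewrite !size_cat; slia.
  have [e1 e2] : flatten vi = ur /\ zz = t.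
    move: (evs) => /eqP; rewrite eq_sym eqseq_cat; last first.
      have := congr1 size evs; rewrite !size_cat; move: hsz hsz2; slia.
    by case/andP => /eqP -> /eqP ->.
  subst zz.
  case: vi hvi0 hvs hvi evs hvfl e1 => [//|v1 [|v2 vr]] _ hvs hvi evs hvfl e1.
    move: hvs => [_ _]; rewrite /= => /andP[hh _].
    by move: e1 => /=; rewrite cats0 => e1; subst v1; rewrite hh in hle.
  apply: (nyl_nofact urn (fs := [:: v1, v2 & vr])) => //.
  by rewrite -e1; apply: hvi.
move=> Eg hy0 hnt; exact: (key (size y0) y0 t0 (leqnn _) Eg hy0 hnt).
Qed.

Lemma Qall n : Qlt n.
Proof.
elim: n => [g y t //|n IH]; apply: Q_lemma => //; exact: P_lemma.
Qed.

Lemma Q_suffix g y t : nyldon g -> g = y ++ t -> y != [::] -> nyldon t -> lexlt t g.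
Proof. by move=> h1 h2 h3 h4; apply: (Qall (n := (size g).+1)) h1 h2 h3 h4. Qed.

Lemma P_last fs v x s : isfact fs v -> fs != [::] -> v = x ++ s -> nyldon s ->
   size s <= size (last [::] fs).
Proof. move=> h1 h2 h3 h4; have H := P_lemma (Qall (n:=size v)); exact: (H fs v x s (leqnn _) h1 h2 h3 h4). Qed.

Definition Inv (u r : word) := nyldon u /\
  forall x s, u = x ++ s -> x != [::] -> s != [::] -> nyldon s -> lexle s r.

Lemma nyl_letter c : nyldon [:: c].
Proof. by apply/nyldonE; left. Qed.

Lemma Inv_letter c r : Inv [:: c] r.
Proof.
split; first exact: nyl_letter.
by move=> [|x0 [|x1 x]] [|s0 s] //=; case.
Qed.

Lemma Inv_weak u r r' : Inv u r -> lexle r r' -> Inv u r'.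
Proof. by move=> [h1 h2] hr; split => // x s e hx hs hn; apply: lexle_trans (h2 x s e hx hs hn) hr. Qed.

Lemma xv_not_nyl u r v y x' : Inv u r -> lexle r v -> nyldon v -> u = y ++ x' -> y != [::] -> x' != [::] ->
  ~ nyldon (x' ++ v).
Proof.
move=> [hu hI] hrv hv eu hy hx' hn.
have [gs [gs0 hgs]] := existence (nonnil_size hx').
move: gs0 hgs; case/lastP: gs => [//|gi z] _ hgs.
have [ex z0 zn _] := isfact_rcons hgs.
have hzr : lexle z r.
  apply: (hI (y ++ flatten gi) z) => //; first by rewrite eu ex catA.
    by case: (y) hy.
  by case: (z) z0.
apply: (nyl_nofact hn (fs := rcons (rcons gi z) v)); first by rewrite !size_rcons.
split.
- by rewrite !flatten_rcons -ex.
- move=> g; rewrite mem_rcons inE => /orP[/eqP->|hg].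
    by split => //; apply: nyldon_size.
  exact: (isfact_mem hgs).
- rewrite -cats1; apply: sorted_join => //; first by have [_ _ H] := hgs.
  exact: lexle_trans hzr hrv.
Qed.

Lemma hall u r v : Inv u r -> nyldon v -> lexlt v u -> lexle r v -> Inv (u ++ v) v.
Proof.
move=> hI hv hvu hrv; have [hu hIu] := hI.
have u0 := nyldon_size hu; have v0 := nyldon_size hv.
split.
  apply/nyldonE; right; split; first by rewrite size_cat; move: u0 v0; slia.
  move=> [fs [f1 f2 f3 f4]].
  have hfs : isfact fs (u ++ v) by [].
  move: f1 f2 f3 f4 hfs; case/lastP: fs => [//|fi z] f1 f2 f3 f4 hfs.
  have [ez z0 zn hfi] := isfact_rcons hfs.
  have hfi0 : fi != [::] by case: (fi) f1.
  have hsz : size v <= size z.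
    have hrc : rcons fi z != [::] by case: (fi).
    by have := P_last hfs hrc (erefl (u ++ v)) hv; rewrite last_rcons.
  have hfl := flatten_nil (hfi hfi0) hfi0.
  case: (ltnP (size v) (size z)) => hvz.
    have [x' [ex' eu]] : exists x', z = x' ++ v /\ u = flatten fi ++ x'.
      by apply: cat_split => //; rewrite -ez; apply: ltnW.
    apply: (xv_not_nyl hI hrv hv eu) => //; first by case: (flatten fi) hfl.
      by apply/eqP => h; move: hvz; rewrite ex' h /= ltnn.
    by rewrite -ex'.
  have [e1 e2] : flatten fi = u /\ z = v.
    move: (ez) => /eqP; rewrite eq_sym eqseq_cat; last first.
      have := congr1 size ez; rewrite !size_cat; move: hsz hvz; slia.
    by case/andP => /eqP -> /eqP ->.
  subst z.
  case: fi f1 f2 f3 f4 hfs hfi ez hfl hfi0 e1 => [//|g1 [|g2 gr]] f1 f2 f3 f4 hfs hfi ez hfl hfi0 e1.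
    move: f4 => /= /andP[hh _].
    move: e1 => /=; rewrite cats0 => e1; subst g1.
    exact: lexle_lt_false hh hvu.
  by apply: (nyl_nofact hu (fs := [:: g1, g2 & gr])) => //; rewrite -e1; apply: hfi.
move=> x s E hx hs hns.
case: (leqP (size v) (size s)) => hvs.
  have [z [ez eu]] := cat_split (esym E) hvs.
  case: (eqVneq z [::]) => hz.
    by subst z; rewrite cat0s in ez; subst s; apply: lexle_refl.
  by exfalso; apply: (xv_not_nyl hI hrv hv eu hx hz); rewrite -ez.
have [z [ez ex]] := cat_split E (ltnW hvs).
apply: lexltW; apply: (Q_suffix hv ez) => //.
by apply/eqP => h; move: hvs; rewrite ez h /= ltnn.
Qed.

Definition gt (l : nat) (A B Bd : word) : word :=
  match l with
  | 1 => true :: A ++ Bd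
  | 2 => true :: A ++ B
  | 3 => true :: A ++ B ++ Bd
  | 4 => true :: A
  | 6 => true :: A ++ A ++ Bd
  | 7 => true :: A ++ A ++ B
  | 8 => true :: A ++ A ++ B ++ Bd
  | 9 => true :: A ++ B ++ A ++ A ++ Bd
  | 10 => true :: A ++ B ++ A ++ A ++ B
  | 11 => true :: A ++ A ++ B ++ B ++ A ++ A ++ Bd
  | 12 => true :: A ++ B ++ A ++ A ++ B ++ B ++ A ++ A ++ Bd
  | _ => [::]
  end.

Definition Hlev A B Bd := nyldon (gt 4 A B Bd) /\ nyldon (gt 8 A B Bd) /\ nyldon (gt 9 A B Bd) /\
  nyldon (gt 10 A B Bd) /\ nyldon (gt 12 A B Bd) /\ Inv (gt 3 A B Bd) (gt 4 A B Bd).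

Ltac lxs := do 6 (rewrite -?catA /=); repeat progress (rewrite ?lexlt_catl /=);
  try apply: lexlt_prefix; try done.

Section Step.
Variables A1 Bd1 : word.
Let A := false :: A1.
Let Bd := true :: Bd1.
Let B := Bd ++ [:: true].
Let A2 := A ++ B ++ B ++ A.
Let B2 := B ++ A ++ A ++ B.
Let Bd2 := B ++ A ++ A ++ Bd.

Let T l := gt l A B Bd.

Lemma c1 : lexlt (T 4) (T 3). Proof. rewrite /T /= /A /B /Bd; lxs. Qed.
Lemma c2 : lexlt (T 12) (T 3). Proof. rewrite /T /= /A /B /Bd; lxs. Qed.
Lemma c3 : lexlt (T 4) (T 12). Proof. rewrite /T /= /A /B /Bd; lxs. Qed.
Lemma c4 : lexlt (T 8) (T 3). Proof. rewrite /T /= /A /B /Bd; lxs. Qed.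
Lemma c5 : lexlt (T 4) (T 8). Proof. rewrite /T /= /A /B /Bd; lxs. Qed.
Lemma c6 : lexlt (T 9) (T 3 ++ T 8). Proof. rewrite /T /= /A /B /Bd; lxs. Qed.
Lemma c7 : lexlt (T 8) (T 9). Proof. rewrite /T /= /A /B /Bd; lxs. Qed.
Lemma c8 : lexlt (T 10) (T 3 ++ T 8). Proof. rewrite /T /= /A /B /Bd; lxs. Qed.
Lemma c9 : lexlt (T 8) (T 10). Proof. rewrite /T /= /A /B /Bd; lxs. Qed.
Lemma c10 : lexlt (T 12) (T 3 ++ T 8). Proof. rewrite /T /= /A /B /Bd; lxs. Qed.
Lemma c11 : lexlt (T 8) (T 12). Proof. rewrite /T /= /A /B /Bd; lxs. Qed.
Lemma c12 : lexlt (T 9) (T 3). Proof. rewrite /T /= /A /B /Bd; lxs. Qed.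
Lemma c13 : lexlt (T 4) (T 9). Proof. rewrite /T /= /A /B /Bd; lxs. Qed.
Lemma c14 : lexlt (T 10) (T 3). Proof. rewrite /T /= /A /B /Bd; lxs. Qed.
Lemma c15 : lexlt (T 4) (T 10). Proof. rewrite /T /= /A /B /Bd; lxs. Qed.
Lemma c16 : lexlt ((T 3 ++ T 8) ++ T 9) (T 3 ++ T 9). Proof. rewrite /T /= /A /B /Bd; lxs. Qed.
Lemma c17 : lexlt (T 9) ((T 3 ++ T 8) ++ T 9). Proof. rewrite /T /= /A /B /Bd; lxs. Qed.
Lemma c18 : lexlt ((T 3 ++ T 8) ++ T 10) (T 3 ++ T 9). Proof. rewrite /T /= /A /B /Bd; lxs. Qed.
Lemma c19 : lexlt (T 9) ((T 3 ++ T 8) ++ T 10). Proof. rewrite /T /= /A /B /Bd; lxs. Qed.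
Lemma c20 : lexlt ((T 3 ++ T 8) ++ T 9) ((T 3 ++ T 8) ++ T 12). Proof. rewrite /T /= /A /B /Bd; lxs. Qed.
Lemma c21 : lexlt (T 12) ((T 3 ++ T 8) ++ T 9). Proof. rewrite /T /= /A /B /Bd; lxs. Qed.
Lemma c22 : lexlt (((T 3 ++ T 8) ++ T 12) ++ ((T 3 ++ T 8) ++ T 9)) (T 3 ++ T 9). Proof. rewrite /T /= /A /B /Bd; lxs. Qed.
Lemma c23 : lexlt (T 9) (((T 3 ++ T 8) ++ T 12) ++ ((T 3 ++ T 8) ++ T 9)). Proof. rewrite /T /= /A /B /Bd; lxs. Qed.
Lemma c24 : lexlt (T 12) (T 3 ++ T 4). Proof. rewrite /T /= /A /B /Bd; lxs. Qed.


Ltac ideq := rewrite /T /= /A2 /B2 /Bd2 /B; do 30 (rewrite -?catA /=); done.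

Lemma e4 : gt 4 A2 B2 Bd2 = T 3 ++ T 4. Proof. ideq. Qed.
Lemma e3 : gt 3 A2 B2 Bd2 = T 3 ++ T 12. Proof. ideq. Qed.
Lemma e1 : gt 1 A2 B2 Bd2 = T 3 ++ T 9. Proof. ideq. Qed.
Lemma e2 : gt 2 A2 B2 Bd2 = T 3 ++ T 10. Proof. ideq. Qed.
Lemma e6 : gt 6 A2 B2 Bd2 = (T 3 ++ T 8) ++ T 9. Proof. ideq. Qed.
Lemma e7 : gt 7 A2 B2 Bd2 = (T 3 ++ T 8) ++ T 10. Proof. ideq. Qed.
Lemma e8 : gt 8 A2 B2 Bd2 = (T 3 ++ T 8) ++ T 12. Proof. ideq. Qed.
Lemma e9 : gt 9 A2 B2 Bd2 = (T 3 ++ T 9) ++ ((T 3 ++ T 8) ++ T 9). Proof. ideq. Qed.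
Lemma e10 : gt 10 A2 B2 Bd2 = (T 3 ++ T 9) ++ ((T 3 ++ T 8) ++ T 10). Proof. ideq. Qed.
Lemma e11 : gt 11 A2 B2 Bd2 = ((T 3 ++ T 8) ++ T 12) ++ ((T 3 ++ T 8) ++ T 9). Proof. ideq. Qed.
Lemma e12 : gt 12 A2 B2 Bd2 = (T 3 ++ T 9) ++ (((T 3 ++ T 8) ++ T 12) ++ ((T 3 ++ T 8) ++ T 9)). Proof. ideq. Qed.

Lemma step : Hlev A B Bd ->
  Hlev A2 B2 Bd2 /\ (forall l, 1 <= l <= 12 -> l != 5 -> nyldon (gt l A2 B2 Bd2)) /\ nyldon (T 3 ++ T 8).
Proof.
move=> [n4 [n8 [n9 [n10 [n12 I3]]]]].
have l44 : lexle (T 4) (T 4) by apply: lexle_refl.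
have I4 := hall I3 n4 c1 l44.
have I3' := hall I3 n12 c2 (lexltW c3).
have I5 := hall I3 n8 c4 (lexltW c5).
have I6 := hall I5 n9 c6 (lexltW c7).
have I7 := hall I5 n10 c8 (lexltW c9).
have I8 := hall I5 n12 c10 (lexltW c11).
have I1 := hall I3 n9 c12 (lexltW c13).
have I2 := hall I3 n10 c14 (lexltW c15).
have I9 := hall I1 I6.1 c16 (lexltW c17).
have I10 := hall I1 I7.1 c18 (lexltW c19).
have I11 := hall I8 I6.1 c20 (lexltW c21).
have I12 := hall I1 I11.1 c22 (lexltW c23).
split; last split; last exact: I5.1.
  rewrite /Hlev e4 e8 e9 e10 e12 e3.
  split; first exact: I4.1. split; first exact: I8.1. split; first exact: I9.1.
  split; first exact: I10.1. split; first exact: I12.1.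
  by apply: Inv_weak I3' _; apply: lexltW; apply: c24.
move=> l /andP[l1 l12] l5.
case: l l1 l12 l5 => [|[|[|[|[|[|[|[|[|[|[|[|[|l]]]]]]]]]]]]] // l1 l12 l5;
  rewrite ?e1 ?e2 ?e3 ?e4 ?e6 ?e7 ?e8 ?e9 ?e10 ?e11 ?e12;
  first [by rewrite ltnNge in l12 |exact: I1.1 | exact: I2.1 | exact: I3'.1 | exact: I4.1 | exact: I6.1 | exact: I7.1
        | exact: I8.1 | exact: I9.1 | exact: I10.1 | exact: I11.1 | exact: I12.1].
Qed.
End Step.

Inductive htree := L (c : bool) | N (l r : htree).
Fixpoint flat t := match t with L c => [:: c] | N l r => flat l ++ flat r end.
Fixpoint valid t := match t with
  | L _ => true
  | N l r => [&& valid l, valid r, lexlt (flat r) (flat l) &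
             (match l with L _ => true | N _ lr => lexle (flat lr) (flat r) end)]
  end.
Definition rbw t := match t with L _ => [::] | N _ r => flat r end.

Lemma valid_Inv t : valid t -> Inv (flat t) (rbw t).
Proof.
elim: t => [c|l IHl r IHr] /=; first by move=> _; apply: Inv_letter.
case/and4P => vl vr hlt hc.
have Il : Inv (flat l) (flat r).
  case: l IHl vl hlt hc => [c|ll lr] IHl vl hlt hc /=; first exact: Inv_letter.
  exact: Inv_weak (IHl vl) hc.
exact: hall Il (IHr vr).1 hlt (lexle_refl _).
Qed.

Definition tr1 := (N (N (N (N (L true) (L false)) (L true)) (N (L true) (L false))) (N (N (L true) (L false)) (L false))).
Definition tr2 := (N (N (N (N (L true) (L false)) (L true)) (N (L true) (L false))) (N (N (N (L true) (L false)) (L false)) (L true))).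
Definition tr3 := (N (N (N (N (L true) (L false)) (L true)) (N (L true) (L false))) (N (N (N (N (L true) (L false)) (L false)) (L true)) (N (N (L true) (L false)) (L false)))).
Definition tr4 := (N (N (N (L true) (L false)) (L true)) (N (L true) (L false))).
Definition tr5 := (N (N (N (L true) (L false)) (L true)) (N (N (N (L true) (L false)) (L false)) (L true))).
Definition tr6 := (N (N (N (L true) (L false)) (L true)) (N (N (N (N (N (L true) (L false)) (L false)) (L true)) (N (L true) (L false))) (N (N (L true) (L false)) (L false)))).
Definition tr7 := (N (N (N (L true) (L false)) (L true)) (N (N (N (N (N (L true) (L false)) (L false)) (L true)) (N (L true) (L false))) (N (N (N (L true) (L false)) (L false)) (L true)))).
Definition tr8 := (N (N (N (N (L true) (L false)) (L true)) (N (N (N (N (L true) (L false)) (L false)) (L true)) (N (L true) (L false)))) (N (N (N (N (L true) (L false)) (L false)) (L true)) (N (N (L true) (L false)) (L false)))).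
Definition tr9 := (N (N (N (N (N (L true) (L false)) (L true)) (N (L true) (L false))) (N (N (L true) (L false)) (L false))) (N (N (N (L true) (L false)) (L true)) (N (N (N (N (N (L true) (L false)) (L false)) (L true)) (N (L true) (L false))) (N (N (L true) (L false)) (L false))))).
Definition tr10 := (N (N (N (N (N (L true) (L false)) (L true)) (N (L true) (L false))) (N (N (L true) (L false)) (L false))) (N (N (N (L true) (L false)) (L true)) (N (N (N (N (N (L true) (L false)) (L false)) (L true)) (N (L true) (L false))) (N (N (N (L true) (L false)) (L false)) (L true))))).
Definition tr11 := (N (N (N (N (N (L true) (L false)) (L true)) (N (N (N (N (L true) (L false)) (L false)) (L true)) (N (L true) (L false)))) (N (N (N (N (L true) (L false)) (L false)) (L true)) (N (N (L true) (L false)) (L false)))) (N (N (N (L true) (L false)) (L true)) (N (N (N (N (N (L true) (L false)) (L false)) (L true)) (N (L true) (L false))) (N (N (L true) (L false)) (L false))))).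
Definition tr12 := (N (N (N (N (N (L true) (L false)) (L true)) (N (L true) (L false))) (N (N (L true) (L false)) (L false))) (N (N (N (N (N (L true) (L false)) (L true)) (N (N (N (N (L true) (L false)) (L false)) (L true)) (N (L true) (L false)))) (N (N (N (N (L true) (L false)) (L false)) (L true)) (N (N (L true) (L false)) (L false)))) (N (N (N (L true) (L false)) (L true)) (N (N (N (N (N (L true) (L false)) (L false)) (L true)) (N (L true) (L false))) (N (N (L true) (L false)) (L false)))))).

Lemma cert t w : valid t -> flat t = w -> nyldon w.
Proof. by move=> h <-; have [] := valid_Inv h. Qed.

Lemma compl_cat x y : compl (x ++ y) = compl x ++ compl y.
Proof. exact: map_cat. Qed.
Lemma complK x : compl (compl x) = x.
Proof. by rewrite /compl -map_comp; elim: x => //= c x ->; rewrite negbK. Qed.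
Lemma dropl_rcons x c : dropl (x ++ [:: c]) = x.
Proof. by rewrite /dropl size_cat addn1 /= take_size_cat. Qed.

Lemma TM_step k : TM (2 * k.+1) = TM (2*k) ++ compl (TM (2*k)) ++ compl (TM (2*k)) ++ TM (2*k).
Proof.
have -> : 2 * k.+1 = (2 * k).+2 by lia.
by rewrite /= compl_cat complK -catA.
Qed.

Lemma TM_form j : exists X, TM (2 * j.+1) = false :: X ++ [:: false].
Proof.
elim: j => [|j [X IH]]; first by exists [:: true; true].
rewrite TM_step IH; exists (X ++ false :: compl (false :: X ++ [:: false]) ++ compl (false :: X ++ [:: false]) ++ false :: X).
by do 10 (rewrite -?catA /=).
Qed.

Lemma base : Hlev (TM 2) (compl (TM 2)) (dropl (compl (TM 2))).
Proof.
split; first by apply: (cert (t := tr4)).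
split; first by apply: (cert (t := tr8)).
split; first by apply: (cert (t := tr9)).
split; first by apply: (cert (t := tr10)).
split; first by apply: (cert (t := tr12)).
have -> : gt 3 (TM 2) (compl (TM 2)) (dropl (compl (TM 2))) = flat tr3 by [].
apply: Inv_weak (valid_Inv (t := tr3) _) _; by [].
Qed.

Lemma TMnext j X : TM (2*j.+1) = false :: X ++ [:: false] ->
  TM (2 * j.+2) = (false :: X ++ [:: false]) ++ ((true :: compl X) ++ [:: true]) ++ ((true :: compl X) ++ [:: true]) ++ (false :: X ++ [:: false]) /\
  compl (TM (2 * j.+2)) = ((true :: compl X) ++ [:: true]) ++ (false :: X ++ [:: false]) ++ (false :: X ++ [:: false]) ++ ((true :: compl X) ++ [:: true]) /\
  dropl (compl (TM (2 * j.+2))) = ((true :: compl X) ++ [:: true]) ++ (false :: X ++ [:: false]) ++ (false :: X ++ [:: false]) ++ (true :: compl X).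
Proof.
move=> E.
have E2 : compl (TM (2 * j.+1)) = (true :: compl X) ++ [:: true] by rewrite E /= compl_cat.
have e2 : compl (TM (2 * j.+2)) = ((true :: compl X) ++ [:: true]) ++ (false :: X ++ [:: false]) ++ (false :: X ++ [:: false]) ++ ((true :: compl X) ++ [:: true]).
  by rewrite TM_step 3!compl_cat complK E2 E.
split; first by rewrite TM_step E2 E.
split => //; rewrite e2.
by rewrite [X in dropl X](_ : _ = (((true :: compl X) ++ [:: true]) ++ (false :: X ++ [:: false]) ++ (false :: X ++ [:: false]) ++ (true :: compl X)) ++ [:: true]) ?dropl_rcons // -!catA.
Qed.

Lemma level j : Hlev (TM (2*j.+1)) (compl (TM (2*j.+1))) (dropl (compl (TM (2*j.+1)))).
Proof.
elim: j => [|j IH]; first exact: base.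
have [X E] := TM_form j.
have E2 : compl (TM (2 * j.+1)) = (true :: compl X) ++ [:: true] by rewrite E /= compl_cat.
have E3 : dropl (compl (TM (2 * j.+1))) = true :: compl X by rewrite E2 dropl_rcons.
rewrite E3 E2 E in IH.
have [H _] := step IH.
have [e1 [e2 e3]] := TMnext E.
by rewrite e3 e2 e1.
Qed.

Lemma tword_gt l k : l != 5 -> tword l k = gt l (TM (2*k)) (compl (TM (2*k))) (dropl (compl (TM (2*k)))).
Proof. by case: l => [|[|[|[|[|[|[|[|[|[|[|[|[|l]]]]]]]]]]]]]. Qed.

Lemma lemma9_ge2 j l : 1 <= l <= 12 -> nyldon (tword l j.+2).
Proof.
move=> hl.
have IH := level j.
have [X E] := TM_form j.
have E2 : compl (TM (2 * j.+1)) = (true :: compl X) ++ [:: true] by rewrite E /= compl_cat.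
have E3 : dropl (compl (TM (2 * j.+1))) = true :: compl X by rewrite E2 dropl_rcons.
rewrite E3 E2 E in IH.
have [_ [Hall H5]] := step IH.
have [e1 [e2 e3]] := TMnext E.
case: (eqVneq l 5) => hl5; last first.
  by rewrite tword_gt // e3 e2 e1; apply: Hall.
subst l; rewrite /tword.
have -> : 2 * j.+2 - 1 = (2 * j.+1).+1 by lia.
have -> : 2 * j.+2 - 2 = 2 * j.+1 by lia.
have -> : TM (2 * j.+1).+1 = TM (2 * j.+1) ++ compl (TM (2 * j.+1)) by [].
rewrite e1 E3 E2 E.
apply: (eq_ind _ nyldon H5).
by do 30 (rewrite -?catA /=).
Qed.

Unset Implicit Arguments.
Theorem lemma9 (k l : nat) : 1 <= k -> 1 <= l <= 12 -> nyldon (tword l k).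
Proof.
case: k => [//|[|j]] _ hl; last exact: lemma9_ge2.
case: l hl => [|[|[|[|[|[|[|[|[|[|[|[|[|l]]]]]]]]]]]]] // _.
- by apply: (cert (t := tr1)).
- by apply: (cert (t := tr2)).
- by apply: (cert (t := tr3)).
- by apply: (cert (t := tr4)).
- by apply: (cert (t := tr5)).
- by apply: (cert (t := tr6)).
- by apply: (cert (t := tr7)).
- by apply: (cert (t := tr8)).
- by apply: (cert (t := tr9)).
- by apply: (cert (t := tr10)).
- by apply: (cert (t := tr11)).
- by apply: (cert (t := tr12)).
Qed.
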